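(* Let $(V,M)$ be a valuation domain with quotient field $L$, $M\neq0$, of the form $V=K+M$ with $K$ a subfield of $V$. Let $D$ be a subring of $K$ with quotient field $F$, let $\widetilde{D}$ be the integral closure of $D$ in $K$, let $R=D+M$ and let $\overline{R}$ be the integral closure of $R$ in $L$. Then: (6) $R$ is a DVR $\iff$ $D=K$ and $V$ is a DVR $\iff$ $R=V$ is a DVR; and likewise $R$ is a rational valuation domain $\iff$ $D=K$ and $V$ is a rational valuation domain $\iff$ $R=V$ is a rational valuation domain. (7) $R\subseteq\overline{R}$ is a root extension (resp. bounded root extension) $\iff$ $D\subseteq\widetilde{D}$ is a root extension (resp. bounded root extension). (8) $R$ is an AV-domain $\iff$ $\widetilde{D}$ is a valuation domain with quotient field $K$ and $D\subseteq\widetilde{D}$ is a root extension $\iff$ $D$ is an AV-domain and $F\subseteq K$ is a root extension (i.e. $K/F$ is purely inseparable or $K$ is algebraic over a finite field). (9) The following are equivalent: $R$ is an AV-domain with $\overline{R}$ a DVR; $R$ is an AV-domain whose maximal ideal $Q$ satisfies $\bigcap_{n\ge1}Q^n=0$; $R$ is an AV-domain and for each ideal $A$ with $0\subsetneq A\subsetneq R$ there is $n$ with $Q^n\subseteq A$, $Q$ the maximal ideal of $R$; $V$ is a DVR, $D=F$ is a field and $F\subseteq K$ is a root extension.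
   Context: A root extension $R\subseteq S$: each $s\in S$ has some power $s^n\in R$; bounded if one $n$ works for all $s$. AV-domain: domain where for nonzero $a,b$ some $n$ gives $a^n\mid b^n$ or $b^n\mid a^n$. DVR: local PID not a field. Rational valuation domain: valuation domain whose value group is order-isomorphic to a subgroup of $(\mathbb{Q},+)$. *)

(* Defs.v *)
From HB Require Import structures.
From mathcomp Require Import all_boot all_order all_algebra.
Set Implicit Arguments. Unset Strict Implicit. Unset Printing Implicit Defensive.
Import Order.TTheory GRing.Theory Num.Theory.
Local Open Scope ring_scope.

(* All rings are subrings of a fixed field L, represented as subsets L -> Prop. *)
Section Defs.
Variable L : fieldType.
Implicit Types A B I J Q : L -> Prop.

Definition incl A B := forall x, A x -> B x.
Definition eqset A B := forall x, A x <-> B x.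

Definition subring A :=
  [/\ A 0, A 1, (forall x y, A x -> A y -> A (x - y)) &
      (forall x y, A x -> A y -> A (x * y))].

Definition is_field A := subring A /\ forall x, A x -> x != 0 -> A x^-1.

Definition fracset A : L -> Prop :=
  fun x => exists a b, [/\ A a, A b, b != 0 & x = a / b].

Definition sumset A B : L -> Prop := fun x => exists a b, [/\ A a, B b & x = a + b].

Definition intclos A B : L -> Prop :=
  fun x => B x /\ exists p : {poly L},
      [/\ p \is monic, (forall i, A p`_i) & root p x].

Definition ideal A I :=
  [/\ incl I A, I 0, (forall x y, I x -> I y -> I (x + y)) &
      (forall r x, A r -> I x -> I (r * x))].

Definition maximal_ideal A I :=
  [/\ ideal A I, ~ I 1 &
      forall J, ideal A J -> incl I J -> eqset J I \/ J 1].

Definition principal A I := exists a, A a /\ forall x, I x <-> exists r, A r /\ x = a * r.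

Definition local_ring A := exists Q, maximal_ideal A Q /\
  forall N, maximal_ideal A N -> eqset N Q.

Definition PID A := subring A /\ forall I, ideal A I -> principal A I.

Definition DVR A := [/\ subring A, local_ring A, PID A & ~ is_field A].

Definition valuation_domain A :=
  subring A /\ forall x, fracset A x -> x != 0 -> A x \/ A x^-1.

(* value group order-isomorphic (as ordered group) to a subgroup of (Q,+):
   an ordered-group embedding of Frac(A)^*/A^* into rat, i.e. a map
   v : Frac(A)^* -> rat with v(xy) = v x + v y and x \in A <-> v x >= 0. *)
Definition rational_valuation_domain A :=
  valuation_domain A /\ exists v : L -> rat,
    (forall x y, fracset A x -> fracset A y -> x != 0 -> y != 0 ->
        v (x * y) = v x + v y) /\
    (forall x, fracset A x -> x != 0 -> (A x <-> 0 <= v x)).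

Definition root_ext A B := forall s, B s -> exists n, (0 < n)%N /\ A (s ^+ n).
Definition bounded_root_ext A B := exists n, (0 < n)%N /\ forall s, B s -> A (s ^+ n).

Definition dvdr A x y := exists c, A c /\ y = x * c.

Definition AV_domain A := subring A /\
  forall a b, A a -> A b -> a != 0 -> b != 0 ->
    exists n, (0 < n)%N /\ (dvdr A (a ^+ n) (b ^+ n) \/ dvdr A (b ^+ n) (a ^+ n)).

Definition idmul I J : L -> Prop := fun x => exists s : seq (L * L),
  (forall p, p \in s -> I p.1 /\ J p.2) /\ x = \sum_(p <- s) p.1 * p.2.

Fixpoint idpow A Q (n : nat) : L -> Prop :=
  match n with O => A | S m => idmul (idpow A Q m) Q end.

End Defs.

(* Main.v *)
Require Import Defs.
From HB Require Import structures.
From mathcomp Require Import all_boot all_order all_algebra.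
From mathcomp Require Import ring lra.
From Stdlib Require Import ClassicalEpsilon FunctionalExtensionality PropExtensionality Classical.
Set Implicit Arguments. Unset Strict Implicit. Unset Printing Implicit Defensive.
Import GRing.Theory Num.Theory Order.TTheory.
Local Open Scope ring_scope.

Definition pb (P : Prop) : bool := if excluded_middle_informative P then true else false.
Lemma pbP (P : Prop) : reflect P (pb P).
Proof. rewrite /pb; case: excluded_middle_informative => h; constructor => //. Qed.

Lemma eqset_eq (L : fieldType) (A B : L -> Prop) : eqset A B -> A = B.
Proof.
move=> h; apply: functional_extensionality => x; apply: propositional_extensionality; exact: h.
Qed.

Section SubT.
Variable (L : fieldType) (A : L -> Prop) (hA : subring A).
Definition Ab : {pred L} := fun x => pb (A x).
Lemma Ab_closed : subring_closed Ab.
Proof.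
case: hA => h0 h1 hB hM; split; rewrite /Ab.
- exact/pbP.
- by move=> x y /pbP hx /pbP hy; apply/pbP; apply: hB.
- by move=> x y /pbP hx /pbP hy; apply/pbP; apply: hM.
Qed.
HB.instance Definition _ := GRing.isSubringClosed.Build L Ab Ab_closed.
Definition ST := {x : L | x \in Ab}.
HB.instance Definition _ := [isSub of ST for (@proj1_sig L (fun x => x \in Ab))].
HB.instance Definition _ := [Choice of ST by <:].
HB.instance Definition _ := [SubChoice_isSubComNzRing of ST by <:].
Definition STval : {rmorphism ST -> L} := GRing.RMorphism.clone _ _ val _.

Definition isint (B : L -> Prop) (x : L) :=
  exists p : {poly L}, [/\ p \is monic, (forall i, B p`_i) & root p x].

Lemma isintP x : isint A x <-> integralOver STval x.
Proof.
split.
- case=> p [mp cp rp].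
  pose p' := \poly_(i < size p) (insubd (0 : ST) p`_i).
  have ep : map_poly STval p' = p.
    apply/polyP => i; rewrite coef_map /= coef_poly.
    case: ltnP => hi.
      by rewrite insubdK //; apply/pbP.
    by rewrite nth_default.
  exists p'; last by rewrite ep.
  have inj : injective STval by apply: val_inj.
  rewrite monicE -(inj_eq inj) -(lead_coef_map_inj inj (rmorph0 STval)) ep rmorph1.
  exact: mp.
- case=> p mp rp; exists (map_poly STval p); split => //.
  + exact: monic_map.
  + by move=> i; rewrite coef_map /=; apply/pbP; case: (p`_i).
Qed.

Lemma isint_sub x y : isint A x -> isint A y -> isint A (x - y).
Proof. move=> /isintP hx /isintP hy; apply/isintP; exact: integral_sub. Qed.
Lemma isint_mul x y : isint A x -> isint A y -> isint A (x * y).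
Proof. move=> /isintP hx /isintP hy; apply/isintP; exact: integral_mul. Qed.
End SubT.

Section Gen.
Variable (L : fieldType).
Implicit Types A B : L -> Prop.

Lemma sr0 A : subring A -> A 0. Proof. by case. Qed.
Lemma sr1 A : subring A -> A 1. Proof. by case. Qed.
Lemma srB A : subring A -> forall x y, A x -> A y -> A (x - y). Proof. by case. Qed.
Lemma srM A : subring A -> forall x y, A x -> A y -> A (x * y). Proof. by case. Qed.
Lemma srN A : subring A -> forall x, A x -> A (- x).
Proof. move=> h x hx; rewrite -sub0r; apply: srB => //; exact: sr0. Qed.
Lemma srD A : subring A -> forall x y, A x -> A y -> A (x + y).
Proof. move=> h x y hx hy; rewrite -[y]opprK; apply: srB => //; exact: srN. Qed.
Lemma srX A : subring A -> forall x n, A x -> A (x ^+ n).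
Proof. move=> h x n hx; elim: n => [|n IH]; rewrite ?expr0 ?exprS; [exact: sr1| exact: srM]. Qed.
Lemma srsum A : subring A -> forall (I : Type) (s : seq I) (P : pred I) (F : I -> L),
  (forall i, P i -> A (F i)) -> A (\sum_(i <- s | P i) F i).
Proof. move=> h I s P F hF; apply: big_ind => //; [exact: sr0 | exact: srD]. Qed.

Lemma isint_of A x : subring A -> A x -> isint A x.
Proof.
move=> h hx; exists ('X - x%:P); split; first exact: monicXsubC.
- move=> i; rewrite coefB coefX coefC; case: i => [|[|i]] /=; rewrite ?sub0r ?subr0.
  + exact: (srN h).
  + exact: (sr1 h).
  + rewrite oppr0; exact: (sr0 h).
- by rewrite root_XsubC.
Qed.

Lemma isint_mono A B x : incl A B -> isint A x -> isint B x.
Proof. by move=> hAB [p [m c r]]; exists p; split => // i; apply: hAB. Qed.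

Lemma isint_root A x n : subring A -> (0 < n)%N -> A (x ^+ n) -> isint A x.
Proof.
move=> h n0 hx; exists ('X^n - (x ^+ n)%:P); split; first exact: monicXnsubC.
- move=> i; rewrite coefB coefXn coefC.
  case: (i == n); case: (i == 0)%N; rewrite /= ?subr0 ?sub0r ?subrr.
  + apply: srB => //; exact: sr1.
  + exact: sr1.
  + exact: srN.
  + exact: sr0.
- by rewrite /root !hornerE subrr.
Qed.

Lemma isint_inv A u : subring A -> A u -> u != 0 -> isint A u^-1 -> A u^-1.
Proof.
move=> h hu u0 [p [mp cp rp]].
have sp : (1 < size p)%N.
  case: (ltnP 1 (size p)) => // hs.
  have : size p = 1%N.
    apply/eqP; rewrite eqn_leq hs /=; rewrite lt0n size_poly_eq0; exact: monic_neq0.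
  move=> s1; move: rp; rewrite /root (size1_polyC hs) hornerC.
  by move: mp; rewrite monicE lead_coefE s1 => /eqP -> ; rewrite oner_eq0.
move: rp; rewrite /root horner_coef.
have -> : size p = (size p).-1.+1 by rewrite prednK // ltnW.
set n := (size p).-1.
rewrite big_ord_recr /=.
have -> : p`_n = 1 by move: mp; rewrite monicE lead_coefE => /eqP.
rewrite mul1r => /eqP e.
have n1 : (0 < n)%N by rewrite /n -subn1 subn_gt0.
have key : u^-1 = - \sum_(i < n) p`_i * u ^+ (n.-1 - i).
  have := congr1 (fun z => z * u ^+ n.-1) e; rewrite mul0r mulrDl.
  have -> : u^-1 ^+ n * u ^+ n.-1 = u^-1.
    by rewrite -{1}(prednK n1) exprS -mulrA exprVn [_ * u ^+ _]mulVf ?mulr1 //; exact: expf_neq0.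
  rewrite big_distrl /= => /eqP; rewrite addrC addr_eq0 => /eqP ->.
  congr (- _); apply: eq_bigr => i _.
  rewrite -mulrA; congr (_ * _).
  have hi : (i <= n.-1)%N by rewrite -ltnS prednK.
  by rewrite -(subnK hi) exprD mulrA mulrAC exprVn [_ * u ^+ i]mulVf ?mul1r ?addnK // expf_neq0.
rewrite key; apply: srN => //; apply: srsum => // i _.
apply: srM => //; exact: srX.
Qed.
End Gen.

Lemma monic_split (L : fieldType) (p : {poly L}) x : p \is monic -> root p x ->
  (0 < (size p).-1)%N /\ x ^+ (size p).-1 = - \sum_(i < (size p).-1) p`_i * x ^+ i.
Proof.
move=> mp rp.
have sp : (1 < size p)%N.
  case: (ltnP 1 (size p)) => // hs.
  have : size p = 1%N.
    apply/eqP; rewrite eqn_leq hs /=; rewrite lt0n size_poly_eq0; exact: monic_neq0.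
  move=> s1; move: rp; rewrite /root (size1_polyC hs) hornerC.
  by move: mp; rewrite monicE lead_coefE s1 => /eqP -> ; rewrite oner_eq0.
split; first by rewrite -subn1 subn_gt0.
move: rp; rewrite /root horner_coef.
have -> : size p = (size p).-1.+1 by rewrite prednK // ltnW.
rewrite big_ord_recr /= -/(size p).-1.
have -> : p`_(size p).-1 = 1 by move: mp; rewrite monicE lead_coefE => /eqP.
by rewrite mul1r addrC addr_eq0 => /eqP ->.
Qed.

Lemma pow_cancel (L : fieldType) (x : L) j n : x != 0 -> (j <= n)%N ->
  x ^+ j * x^-1 ^+ n = x^-1 ^+ (n - j).
Proof.
move=> x0 hj; rewrite -{1}(subnK hj) exprD mulrC -mulrA [x^-1 ^+ j]exprVn mulVf ?mulr1 //.
exact: expf_neq0.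
Qed.

Lemma dv_eq (L : fieldType) (x y c : L) : x != 0 -> y = x * c -> c = y / x.
Proof. by move=> x0 ->; rewrite [x * c]mulrC mulfK. Qed.

Lemma mul_div (L : fieldType) (a b : L) : b != 0 -> a = b * (a / b).
Proof. by move=> b0; rewrite mulrC divfK. Qed.

Lemma pow_mul_div (L : fieldType) (a b : L) n : b != 0 -> a ^+ n = b ^+ n * (a / b) ^+ n.
Proof. by move=> b0; rewrite -exprMn {1}(mul_div a b0). Qed.

Lemma seq_sum_ind (L : fieldType) (T : eqType) (P : L -> Prop) (s : seq T) (F : T -> L) :
  P 0 -> (forall x y, P x -> P y -> P (x + y)) -> (forall p, p \in s -> P (F p)) ->
  P (\sum_(p <- s) F p).
Proof.
move=> h0 hD hF; rewrite big_seq; apply: big_ind => //.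
Qed.

Lemma idmul_mono (L : fieldType) (I I' J : L -> Prop) :
  incl I I' -> incl (idmul I J) (idmul I' J).
Proof.
move=> h x [s [hs ->]]; exists s; split => // p /hs [h1 h2]; split => //; exact: h.
Qed.

Lemma idmul_one (L : fieldType) (I J : L -> Prop) a b : I a -> J b -> idmul I J (a * b).
Proof.
move=> ha hb; exists [:: (a, b)]; split; last by rewrite big_seq1.
by move=> p; rewrite inE => /eqP ->.
Qed.

Section Main.
Variables (L : fieldType) (V M K D : L -> Prop).
Hypotheses (hV : valuation_domain V) (hVL : forall x, fracset V x)
  (hM : maximal_ideal V M) (hM0 : exists m, M m /\ m != 0)
  (hK : is_field K) (hKV : incl K V) (hVKM : eqset V (sumset K M))
  (hD : subring D) (hDK : incl D K).

Lemma Vsr : subring V. Proof. by case: hV. Qed.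
Lemma Ksr : subring K. Proof. by case: hK. Qed.
Lemma Kinv x : K x -> x != 0 -> K x^-1. Proof. by case: hK => _; apply. Qed.
Lemma Mid : ideal V M. Proof. by case: hM. Qed.
Lemma M1 : ~ M 1. Proof. by case: hM. Qed.
Lemma MV x : M x -> V x. Proof. by case: Mid => h _ _ _; apply: h. Qed.
Lemma M0 : M 0. Proof. by case: Mid. Qed.
Lemma MD x y : M x -> M y -> M (x + y). Proof. by case: Mid => _ _ h _; apply: h. Qed.
Lemma MmulV r x : V r -> M x -> M (r * x). Proof. by case: Mid => _ _ _ h; apply: h. Qed.
Lemma MmulVr r x : V r -> M x -> M (x * r). Proof. by move=> *; rewrite mulrC; apply: MmulV. Qed.
Lemma MN x : M x -> M (- x).
Proof. move=> h; rewrite -mulN1r; apply: MmulV h; exact: srN Vsr _ (sr1 Vsr). Qed.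
Lemma MB x y : M x -> M y -> M (x - y). Proof. by move=> *; apply: MD => //; apply: MN. Qed.
Lemma Msum (I : Type) (s : seq I) (P : pred I) (F : I -> L) :
  (forall i, P i -> M (F i)) -> M (\sum_(i <- s | P i) F i).
Proof. move=> hF; apply: big_ind => //; [exact: M0 | exact: MD]. Qed.

Lemma KM0 x : K x -> M x -> x = 0.
Proof.
move=> kx mx; have [//|x0] := eqVneq x 0; exfalso; apply: M1.
have -> : 1 = x^-1 * x by rewrite mulVf.
by apply: MmulV mx; apply: hKV; apply: Kinv.
Qed.

Lemma Vdec x : V x -> exists k m, [/\ K k, M m & x = k + m].
Proof. by move=> /hVKM [k [m [hk hm ->]]]; exists k, m. Qed.

Lemma KMuniq k1 k2 m1 m2 : K k1 -> K k2 -> M m1 -> M m2 -> k1 + m1 = k2 + m2 -> k1 = k2.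
Proof.
move=> h1 h2 h3 h4 e; apply/eqP; rewrite -subr_eq0; apply/eqP; apply: KM0.
- exact: srB Ksr _ _ h1 h2.
- have -> : k1 - k2 = m2 - m1.
    by apply/eqP; rewrite subr_eq addrC addrA -e addrK.
  exact: MB.
Qed.

Lemma VKM x : V x <-> sumset K M x. Proof. exact: hVKM. Qed.

Lemma frac_all (S : L -> Prop) : incl M S -> forall x, fracset S x.
Proof.
move=> hS x; case: (hVL x) => a [b [ha hb b0 ->]].
case: hM0 => m [hm m0].
exists (a * m), (b * m); split.
- by apply: hS; apply: MmulV.
- by apply: hS; apply: MmulV.
- by rewrite mulf_neq0.
- by rewrite invfM mulrACA mulfV // mulr1.
Qed.

Definition unitV x := x != 0 /\ V x^-1.

Lemma nonunit_M x : V x -> ~ M x -> unitV x.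
Proof.
move=> vx nmx.
pose N y := V y /\ ~ unitV y.
have idN : ideal V N.
  split.
  - by move=> y [].
  - by split; [exact: sr0 Vsr | case; rewrite eqxx].
  - move=> y z [vy ny] [vz nz]; split; first exact: srD Vsr _ _ vy vz.
    case=> yz0 vyz.
    have [e|y0] := eqVneq y 0; first by subst y; apply: nz; rewrite add0r in yz0 vyz.
    have [e|z0] := eqVneq z 0; first by subst z; apply: ny; rewrite addr0 in yz0 vyz.
    have [v1|v2] := (proj2 hV) (y / z) (hVL _) (mulf_neq0 y0 (invr_neq0 z0)).
    + apply: nz; split => //.
      have -> : z^-1 = (1 + y / z) * (y + z)^-1.
        by field; rewrite yz0 z0.
      apply: srM Vsr _ _ _ vyz; apply: srD Vsr _ _ (sr1 Vsr) v1.
    + apply: ny; split => //.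
      rewrite invfM invrK in v2.
      have -> : y^-1 = (1 + z / y) * (y + z)^-1.
        by field; rewrite yz0 y0.
      apply: srM Vsr _ _ _ vyz; apply: srD Vsr _ _ (sr1 Vsr) _.
      by rewrite mulrC.
  - move=> r y vr [vy ny]; split; first exact: srM Vsr _ _ vr vy.
    case=> ry0 vry; apply: ny; split; first by move: ry0; rewrite mulf_eq0 negb_or => /andP[].
    have -> : y^-1 = r * (r * y)^-1.
      have r0 : r != 0 by move: ry0; rewrite mulf_eq0 negb_or => /andP[].
      by rewrite invfM mulrA divff // mul1r.
    exact: srM Vsr _ _ vr vry.
have MN' : incl M N.
  move=> y my; split; first exact: MV.
  case=> y0 vy; apply: M1; rewrite -(mulVf y0); exact: MmulV.
have N1 : ~ N 1 by case=> _; apply; split; [exact: oner_neq0 | rewrite invr1; exact: sr1 Vsr].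
case: hM => _ _ /(_ N idN MN') [e|n1]; last by [].
apply: NNPP => nu; apply: nmx; apply/e; split => //.
Qed.

Lemma M_nonunit x : M x -> x != 0 -> ~ V x^-1.
Proof. move=> mx x0 vx; apply: M1; rewrite -(mulVf x0); exact: MmulV. Qed.

Lemma dec_unit k m : K k -> k != 0 -> M m -> unitV (k + m).
Proof.
move=> kk k0 mm; apply: nonunit_M.
  by apply/VKM; exists k, m.
move=> h; apply/negP: k0; rewrite negbK; apply/eqP; apply: KM0 => //.
by rewrite -(addrK m k); apply: MB.
Qed.

Lemma inv_dec k m : K k -> k != 0 -> M m -> exists m', M m' /\ (k + m)^-1 = k^-1 + m'.
Proof.
move=> kk k0 mm; have [x0 vx] := dec_unit kk k0 mm.
exists ((k + m)^-1 - k^-1); split; last by rewrite [_ + (_ - _)]addrC subrK.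
have -> : (k + m)^-1 - k^-1 = - m * ((k + m)^-1 * k^-1).
  by field; rewrite x0 k0.
apply: MmulVr; first exact: srM Vsr _ _ vx (hKV (Kinv kk k0)).
exact: MN.
Qed.

Lemma pow_dec k m n : K k -> M m -> exists m', M m' /\ (k + m) ^+ n = k ^+ n + m'.
Proof.
move=> kk mm; exists ((k + m) ^+ n - k ^+ n); split; last by rewrite [_ + (_ - _)]addrC subrK.
elim: n => [|n IH]; first by rewrite !expr0 subrr; exact: M0.
have -> : (k + m) ^+ n.+1 - k ^+ n.+1 = (k + m) * ((k + m) ^+ n - k ^+ n) + m * k ^+ n.
  by rewrite !exprS; ring.
apply: MD.
- by apply: MmulV IH; apply: srD Vsr _ _ (hKV kk) (MV mm).
- by apply: MmulVr mm; apply: srX Vsr _ _ (hKV kk).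
Qed.

Section SumA.
Variable A : L -> Prop.
Hypotheses (hA : subring A) (hAK : incl A K).

Lemma sumA_sr : subring (sumset A M).
Proof.
split.
- by exists 0, 0; rewrite addr0; split => //; [exact: sr0 hA | exact: M0].
- by exists 1, 0; rewrite addr0; split => //; [exact: sr1 hA | exact: M0].
- move=> _ _ [a [m [ha hm ->]]] [b [n [hb hn ->]]].
  exists (a - b), (m - n); split; [exact: srB hA _ _ ha hb | exact: MB | ].
  by rewrite opprD addrACA.
- move=> _ _ [a [m [ha hm ->]]] [b [n [hb hn ->]]].
  exists (a * b), (a * n + m * (b + n)); split; [exact: srM hA _ _ ha hb | | ].
  + apply: MD; first by apply: MmulV hn; exact: hKV (hAK ha).
    by apply: MmulVr hm; apply: srD Vsr _ _ (hKV (hAK hb)) (MV hn).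
  + by ring.
Qed.

Lemma sumA_K x : sumset A M x -> K x -> A x.
Proof.
case=> a [m [ha hm ->]] hx.
have -> : m = 0.
  apply: KM0 => //; have -> : m = (a + m) - a by ring.
  exact: srB Ksr _ _ hx (hAK ha).
by rewrite addr0.
Qed.

Lemma sumA_V x : sumset A M x -> V x.
Proof. by case=> a [m [ha hm ->]]; apply/VKM; exists a, m; split => //; apply: hAK. Qed.

Lemma M_sumA x : M x -> sumset A M x.
Proof. by move=> h; exists 0, x; rewrite add0r; split => //; exact: sr0 hA. Qed.

Lemma A_sumA x : A x -> sumset A M x.
Proof. by move=> h; exists x, 0; rewrite addr0; split => //; exact: M0. Qed.

Lemma frac_sumA x : fracset (sumset A M) x.
Proof. apply: frac_all; exact: M_sumA. Qed.

End SumA.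

Lemma sumK : sumset K M = V.
Proof. by apply: eqset_eq => x; split => /hVKM. Qed.

Section SumA2.
Variable A : L -> Prop.
Hypotheses (hA : subring A) (hAK : incl A K).

Lemma dvr_KM : DVR (sumset A M) -> eqset A K.
Proof.
case=> _ _ [_ hP] _.
have idM : ideal (sumset A M) M.
  split.
  - by move=> x; apply: M_sumA.
  - exact: M0.
  - exact: MD.
  - by move=> r x hr hx; apply: MmulV hx; apply: (sumA_V hAK).
case: (hP M idM) => a [ha hMa].
have Ma : M a by apply/hMa; exists 1; rewrite mulr1; split => //; apply: A_sumA (sr1 hA).
have a0 : a != 0.
  case: hM0 => m [mm m0]; case/hMa: mm => r [_ e].
  by apply: contraNneq m0 => a0; rewrite e a0 mul0r.
move=> x; split; first exact: hAK.
move=> kx; have : M (x * a) by apply: MmulV Ma; apply: hKV.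
case/hMa => r [hr e].
have -> : x = r by apply: (mulIf a0); rewrite e mulrC.
apply: (sumA_K hAK) => //.
have -> : r = x by apply: (mulIf a0); rewrite e mulrC.
exact: kx.
Qed.

Lemma rvd_KM : rational_valuation_domain (sumset A M) -> eqset A K.
Proof.
case=> [[_ hval] [v [hmul hpos]]].
have fr := frac_sumA hA.
move=> x; split; first exact: hAK.
move=> kx; have [->|x0] := eqVneq x 0; first exact: sr0 hA.
have v1 : v 1 = 0.
  have := hmul 1 1 (fr _) (fr _) (oner_neq0 _) (oner_neq0 _).
  rewrite mulr1 => h; lra.
have [Sx|Sx'] := hval x (fr _) x0; first exact: (sumA_K hAK).
apply: NNPP => nAx.
have nSx : ~ sumset A M x by move=> h; apply: nAx; apply: (sumA_K hAK).
have vx : v x < 0.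
  rewrite ltNge; apply/negP => h; apply: nSx; apply/hpos => //; exact: fr.
have vpow : forall n, v (x ^+ n) = v x *+ n.
  elim=> [|n IH]; first by rewrite expr0 mulr0n.
  by rewrite exprS hmul ?fr ?expf_neq0 // IH mulrS.
case: hM0 => m [mm m0].
have vm : 0 <= v m by apply/hpos; [exact: fr | exact: m0 | exact: (M_sumA hA mm)].
have hn : forall n, 0 <= v m + v x *+ n.
  move=> n; rewrite -vpow -hmul ?fr ?expf_neq0 //.
  apply/hpos; [exact: fr | by rewrite mulf_neq0 ?expf_neq0 | ].
  apply: (M_sumA hA); apply: MmulVr mm; apply: srX Vsr _ _ (hKV kx).
set c := - v x.
have c0 : 0 < c by rewrite /c oppr_gt0.
have b := archi_boundP (divr_ge0 vm (ltW c0)).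
set n := Num.bound _ in b.
have := hn n; rewrite -[v x]opprK -/c mulNrn.
have : v m < n%:R * c by rewrite -ltr_pdivrMr.
rewrite -mulr_natl; lra.
Qed.

End SumA2.
Lemma Vic x : isint V x -> V x.
Proof.
case=> p [mp cp rp]; apply: NNPP => nvx.
have x0 : x != 0 by apply: contra_not_neq nvx => ->; exact: sr0 Vsr.
have vy : V x^-1.
  case: (proj2 hV x (hVL x) x0) => // h.
have my : M x^-1.
  apply: NNPP => h; have [_ ] := nonunit_M vy h; rewrite invrK; exact: nvx.
have [n0 e] := monic_split mp rp.
set n := (size p).-1 in n0 e.
apply: M1.
have -> : 1 = x ^+ n * x^-1 ^+ n by rewrite pow_cancel // subnn expr0.
rewrite e mulNr big_distrl /=; apply: MN; apply: Msum => i _.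
rewrite -mulrA; apply: MmulV; first exact: cp.
have hi : (i <= n.-1)%N by rewrite -ltnS prednK.
rewrite (pow_cancel x0 (ltnW (ltn_ord i))).
have -> : (n - i = (n.-1 - i).+1)%N by rewrite -subSn // prednK.
by rewrite exprS; apply: MmulVr my; apply: srX Vsr _ _ vy.
Qed.

Definition piK (y : L) : L := epsilon (inhabits 0) (fun k => K k /\ M (y - k)).

Lemma pi_spec y : V y -> K (piK y) /\ M (y - piK y).
Proof.
move=> vy; rewrite /piK; apply: (epsilon_spec (inhabits 0) (fun k => K k /\ M (y - k))).
case: (Vdec vy) => k [m [hk hm ->]]; exists k; split => //.
by have -> : k + m - k = m by ring.
Qed.

Lemma pi_eq y k : K k -> M (y - k) -> piK y = k.
Proof.
move=> hk hm.
have vy : V y.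
  have -> : y = k + (y - k) by ring.
  apply: srD Vsr _ _ (hKV hk) (MV hm).
have [h1 h2] := pi_spec vy.
apply: (KMuniq h1 hk h2 hm).
by ring.
Qed.

Lemma pi_A A y : incl A K -> sumset A M y -> A (piK y).
Proof.
move=> hAK [a [m [ha hm ->]]].
by rewrite (pi_eq (hAK _ ha)) //; have -> : a + m - a = m by ring.
Qed.

Section RbA.
Variable A : L -> Prop.
Hypotheses (hA : subring A) (hAK : incl A K).

Lemma Rb_char : eqset (intclos (sumset A M) (fun _ => True)) (sumset (intclos A K) M).
Proof.
move=> x; split.
- case=> _ [p [mp cp rp]].
  have vx : V x by apply: Vic; exists p; split => // i; apply: (sumA_V hAK).
  case: (Vdec vx) => k [m [hk hm ex]].
  exists k, m; split => //; split => //.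
  pose q := \poly_(i < size p) piK p`_i.
  have pi1 : piK 1 = 1 by apply: pi_eq; [exact: sr1 Ksr | rewrite subrr; exact: M0].
  have sp : (0 < size p)%N by rewrite lt0n size_poly_eq0 monic_neq0.
  have lp : p`_(size p).-1 = 1 by move: mp; rewrite monicE lead_coefE => /eqP.
  have sq : size q = size p.
    by apply: size_poly_eq; rewrite lp pi1 oner_neq0.
  exists q; split.
  + by rewrite monicE lead_coefE sq coef_poly prednK // leqnn lp pi1.
  + move=> i; rewrite coef_poly; case: ifP => _; last exact: sr0 hA.
    exact: pi_A (cp i).
  + have vp : forall i, V p`_i by move=> i; apply: (sumA_V hAK).
    have hq : forall i, K q`_i.
      move=> i; rewrite coef_poly; case: ifP => _; last exact: sr0 Ksr.
      exact: (pi_spec (vp i)).1.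
    have Kq : K q.[k].
      rewrite horner_coef; apply: (srsum Ksr) => i _.
      exact (srM Ksr (hq i) (srX Ksr i hk)).
    have Mq : M q.[k].
      have -> : q.[k] = - (p.[x] - q.[k]) by move/eqP: rp ->; rewrite sub0r opprK.
      apply: MN; rewrite (horner_coef_wide _ (leqnn (size p))).
      rewrite (horner_coef_wide k (eq_leq sq)) -sumrB; apply: Msum => i _.
      have [m' [hm' ex']] := pow_dec i hk hm.
      have -> : p`_i * x ^+ i - q`_i * k ^+ i =
                (p`_i - q`_i) * x ^+ i + q`_i * (x ^+ i - k ^+ i) by ring.
      apply: MD.
      * apply: MmulVr; first exact: srX Vsr _ _ vx.
        rewrite coef_poly ltn_ord; exact: (pi_spec (vp i)).2.
      * apply: MmulV; first exact: hKV (hq i).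
        by rewrite ex ex'; have -> : k ^+ i + m' - k ^+ i = m' by ring.
    by rewrite /root (KM0 Kq Mq).
- case=> k [m [[hk [p [mp cp rp]]] hm ->]]; split => //.
  have sr := sumA_sr hA hAK.
  have -> : k + m = k - (- m) by rewrite opprK.
  apply: isint_sub => //.
  + exists p; split => // i; exact: (A_sumA (cp i)).
  + apply: isint_of => //; apply: (M_sumA hA); exact: MN.
Qed.
End RbA.

Lemma part7a : root_ext (sumset D M) (intclos (sumset D M) (fun _ => True)) <->
               root_ext D (intclos D K).
Proof.
have RC := Rb_char hD hDK.
split.
- move=> h s hs; have [n [n0 hn]] := h s (proj2 (RC s) (ex_intro _ s (ex_intro _ 0 (And3 hs M0 (esym (addr0 s)))))).
  exists n; split => //; apply: (sumA_K hDK hn); exact (srX Ksr n (proj1 hs)).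
- move=> h s /RC [k [m [hk hm ->]]]; have [n [n0 hn]] := h k hk.
  exists n; split => //; have [m' [hm' ->]] := pow_dec n (proj1 hk) hm.
  by exists (k ^+ n), m'.
Qed.

Lemma part7b : bounded_root_ext (sumset D M) (intclos (sumset D M) (fun _ => True)) <->
               bounded_root_ext D (intclos D K).
Proof.
have RC := Rb_char hD hDK.
split.
- move=> [n [n0 h]]; exists n; split => // s hs.
  have hn := h s (proj2 (RC s) (ex_intro _ s (ex_intro _ 0 (And3 hs M0 (esym (addr0 s)))))).
  apply: (sumA_K hDK hn); exact (srX Ksr n (proj1 hs)).
- move=> [n [n0 h]]; exists n; split => // s /RC [k [m [hk hm ->]]].
  have hn := h k hk.
  have [m' [hm' ->]] := pow_dec n (proj1 hk) hm.
  by exists (k ^+ n), m'.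
Qed.

Definition P_root := forall x, K x -> x != 0 ->
  exists n, (0 < n)%N /\ (D (x ^+ n) \/ D (x^-1 ^+ n)).

Lemma Dt_sr : subring (intclos D K).
Proof.
split.
- split; [exact: sr0 Ksr | exact: isint_of hD (sr0 hD)].
- split; [exact: sr1 Ksr | exact: isint_of hD (sr1 hD)].
- move=> x y [kx ix] [ky iy]; split; [exact: srB Ksr _ _ kx ky | exact: isint_sub].
- move=> x y [kx ix] [ky iy]; split; [exact (srM Ksr kx ky) | exact: isint_mul].
Qed.

Lemma fracDt_K x : fracset (intclos D K) x -> K x.
Proof.
case=> a [b [[ka _] [kb _] b0 ->]]; exact (srM Ksr ka (Kinv kb b0)).
Qed.

Lemma keyD : P_root ->
  [/\ valuation_domain (intclos D K), eqset (fracset (intclos D K)) K &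
      root_ext D (intclos D K)].
Proof.
move=> hP.
have Dt_of : forall x n, K x -> (0 < n)%N -> D (x ^+ n) -> intclos D K x.
  by move=> x n kx n0 hx; split => //; apply: isint_root hD n0 hx.
have Dt1 : intclos D K 1 by case: Dt_sr.
have Dt0 : intclos D K 0 by case: Dt_sr.
split.
- split; first exact: Dt_sr.
  move=> x fx x0; have kx := fracDt_K fx.
  have [n [n0 [h|h]]] := hP x kx x0; [left | right]; apply: Dt_of h => //.
  exact: Kinv.
- move=> x; split; first exact: fracDt_K.
  move=> kx; have [->|x0] := eqVneq x 0.
    by exists 0, 1; split => //; [exact: oner_neq0 | rewrite mul0r].
  have [n [n0 [h|h]]] := hP x kx x0.
  + exists x, 1; split => //; [exact: Dt_of h | exact: oner_neq0 | by rewrite invr1 mulr1].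
  + exists 1, x^-1; split => //; [exact: Dt_of (Kinv kx x0) n0 h | by rewrite invr_eq0 | by rewrite invrK mul1r].
- move=> s hs; have [->|s0] := eqVneq s 0.
    by exists 1%N; split => //; rewrite expr1; exact: sr0 hD.
  have [n [n0 [h|h]]] := hP s hs.1 s0; exists n; split => //.
  have u0 : s^-1 ^+ n != 0 by rewrite expf_neq0 // invr_eq0.
  have := isint_inv hD h u0.
  rewrite exprVn invrK; apply.
  exact: (srX Dt_sr n hs).2.
Qed.

Lemma AVR_P : AV_domain (sumset D M) -> P_root.
Proof.
case=> _ hAV x kx x0.
case: hM0 => m [mm m0].
have xm0 : x * m != 0 by rewrite mulf_neq0.
have Rm : sumset D M m := M_sumA hD mm.
have Rxm : sumset D M (x * m) by apply: (M_sumA hD); apply: MmulV mm; exact: hKV _ kx.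
have [n [n0 [[c [hc e]]|[c [hc e]]]]] := hAV _ _ Rxm Rm xm0 m0; exists n; split => //.
- right; have ec := dv_eq (expf_neq0 n xm0) e.
  have -> : x^-1 ^+ n = c.
    by rewrite ec exprMn invfM mulrCA divff ?expf_neq0 // mulr1 exprVn.
  apply: (sumA_K hDK hc); rewrite ec exprMn invfM mulrCA divff ?expf_neq0 // mulr1.
  by rewrite -exprVn; exact (srX Ksr n (Kinv kx x0)).
- left; have ec := dv_eq (expf_neq0 n m0) e.
  have -> : x ^+ n = c by rewrite ec exprMn mulfK // expf_neq0.
  apply: (sumA_K hDK hc); rewrite ec exprMn mulfK ?expf_neq0 //.
  exact (srX Ksr n kx).
Qed.

Lemma P_AVR : [/\ valuation_domain (intclos D K), eqset (fracset (intclos D K)) K &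
      root_ext D (intclos D K)] -> AV_domain (sumset D M).
Proof.
case=> [[_ hval] hfr hroot].
have gen : forall w, V w -> w != 0 ->
    exists n, (0 < n)%N /\ (sumset D M (w ^+ n) \/ sumset D M (w^-1 ^+ n)).
  move=> w vw w0.
  case: (classic (M w)) => mw.
    by exists 1%N; split => //; left; rewrite expr1; apply: (M_sumA hD).
  case: (Vdec vw) => k [m [hk hm ew]].
  have k0 : k != 0.
    by apply/eqP => k0; apply: mw; rewrite ew k0 add0r.
  have [h|h] := hval k (proj2 (hfr k) hk) k0.
  - have [n [n0 hn]] := hroot k h; exists n; split => //; left.
    rewrite ew; have [m' [hm' ->]] := pow_dec n hk hm; by exists (k ^+ n), m'.
  - have [n [n0 hn]] := hroot _ h; exists n; split => //; right.
    rewrite ew; have [m1 [hm1 ->]] := inv_dec hk k0 hm.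
    have [m' [hm' ->]] := pow_dec n (Kinv hk k0) hm1; by exists (k^-1 ^+ n), m'.
split; first exact: sumA_sr hD hDK.
move=> a b ra rb a0 b0.
have va := sumA_V hDK ra; have vb := sumA_V hDK rb.
have ab0 : a / b != 0 by rewrite mulf_neq0 ?invr_eq0.
have [va'|vb'] := proj2 hV (a / b) (hVL _) ab0.
- have [n [n0 [h|h]]] := gen _ va' ab0; exists n; split => //.
  + by right; exists ((a / b) ^+ n); split => //; apply: pow_mul_div.
  + left; exists ((a / b)^-1 ^+ n); split => //.
    by rewrite invf_div; apply: pow_mul_div.
- rewrite invf_div in vb'.
  have ba0 : b / a != 0 by rewrite mulf_neq0 ?invr_eq0.
  have [n [n0 [h|h]]] := gen _ vb' ba0; exists n; split => //.
  + by left; exists ((b / a) ^+ n); split => //; apply: pow_mul_div.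
  + right; exists ((b / a)^-1 ^+ n); split => //.
    by rewrite invf_div; apply: pow_mul_div.
Qed.

Lemma part8a : AV_domain (sumset D M) <->
  [/\ valuation_domain (intclos D K), eqset (fracset (intclos D K)) K &
      root_ext D (intclos D K)].
Proof. split; [by move=> h; apply: keyD; apply: AVR_P | exact: P_AVR]. Qed.

Lemma part8b :
  [/\ valuation_domain (intclos D K), eqset (fracset (intclos D K)) K &
      root_ext D (intclos D K)] <-> AV_domain D /\ root_ext (fracset D) K.
Proof.
split.
- case=> [[_ hval] hfr hroot]; split.
  + split => // a b da db a0 b0.
    have ab0 : a / b != 0 by rewrite mulf_neq0 ?invr_eq0.
    have kab : K (a / b) by exact (srM Ksr (hDK da) (Kinv (hDK db) b0)).
    have [h|h] := hval _ (proj2 (hfr _) kab) ab0.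
    * have [n [n0 hn]] := hroot _ h; exists n; split => //; right.
      by exists ((a / b) ^+ n); split => //; apply: pow_mul_div.
    * have [n [n0 hn]] := hroot _ h; exists n; split => //; left.
      exists ((a / b)^-1 ^+ n); split => //.
      by rewrite invf_div; apply: pow_mul_div.
  + move=> s ks; have [->|s0] := eqVneq s 0.
      exists 1%N; split => //; exists 0, 1; split; [exact: sr0 hD | exact: sr1 hD | exact: oner_neq0 | ].
      by rewrite expr1 mul0r.
    case: (proj2 (hfr s) ks) => a [b [ha hb b0 es]].
    have [n [n0 hn]] := hroot _ ha; have [m [m0 hm]] := hroot _ hb.
    exists (n * m)%N; split; first by rewrite muln_gt0 n0 m0.
    exists ((a ^+ n) ^+ m), ((b ^+ m) ^+ n); split.
    * exact (srX hD m hn).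
    * exact (srX hD n hm).
    * by rewrite !expf_neq0.
    * by rewrite es expr_div_n -!exprM mulnC.
- case=> [[_ hAV] hroot]; apply: keyD => x kx x0.
  have [n [n0 [a [b [da db b0 e]]]]] := hroot x kx.
  have a0 : a != 0.
    apply/eqP => a0; move: e; rewrite a0 mul0r => /eqP; rewrite expf_eq0 (negbTE x0) andbF //.
  have [m [m0 [[c [hc ec]]|[c [hc ec]]]]] := hAV a b da db a0 b0.
  + exists (n * m)%N; split; first by rewrite muln_gt0 n0 m0.
    right; have -> : x^-1 ^+ (n * m) = c.
      by rewrite (dv_eq (expf_neq0 m a0) ec) -expr_div_n -invf_div -e exprM exprVn.
    exact: hc.
  + exists (n * m)%N; split; first by rewrite muln_gt0 n0 m0.
    left; have -> : x ^+ (n * m) = c.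
      by rewrite (dv_eq (expf_neq0 m b0) ec) exprM e -expr_div_n.
    exact: hc.
Qed.

Definition unitprop (Q : L -> Prop) := forall x, sumset D M x -> ~ Q x ->
  exists y, sumset D M y /\ y * x = 1.

Lemma unitR d m : D d -> d != 0 -> D d^-1 -> M m -> sumset D M (d + m)^-1.
Proof.
move=> hd d0 hdi hm; have [m' [hm' ->]] := inv_dec (hDK hd) d0 hm.
by exists d^-1, m'.
Qed.

Lemma max_of Q : ideal (sumset D M) Q -> ~ Q 1 -> unitprop Q -> maximal_ideal (sumset D M) Q.
Proof.
move=> hQ nQ1 hu; split => // J hJ hQJ.
case: (classic (incl J Q)) => hJQ.
  by left => x; split; [apply: hJQ | apply: hQJ].
right; have [x hx] := not_all_ex_not _ _ hJQ.
have [Jx nQx] := imply_to_and _ _ hx.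
case: hJ => hJR _ _ hJm.
have [y [ry e]] := hu x (hJR _ Jx) nQx.
by rewrite -e; apply: hJm.
Qed.

Lemma max_uniq Q0 Q : maximal_ideal (sumset D M) Q0 -> unitprop Q0 ->
  maximal_ideal (sumset D M) Q -> Q = Q0.
Proof.
move=> hQ0 hu [hQ nQ1 hmax].
have sub : incl Q Q0.
  move=> x Qx; apply: NNPP => nx.
  case: hQ => hQR _ _ hQm.
  have [y [ry e]] := hu x (hQR _ Qx) nx.
  by apply: nQ1; rewrite -e; apply: hQm.
case: (hmax Q0 (match hQ0 with And3 a _ _ => a end) sub) => [e|h]; last by case: hQ0 => _ /(_ h).
apply: eqset_eq => x; split; [exact: sub | by move/e].
Qed.

Definition Dfield := forall d, D d -> d != 0 -> D d^-1.

Lemma idealM : ideal (sumset D M) M.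
Proof.
split; [by move=> x; apply: (M_sumA hD) | exact: M0 | exact: MD | ].
by move=> r x hr hx; apply: MmulV hx; apply: (sumA_V hDK).
Qed.

Lemma unitM : Dfield -> unitprop M.
Proof.
move=> hF x [d [m [hd hm ->]]] nx.
have d0 : d != 0 by apply/eqP => d0; apply: nx; rewrite d0 add0r.
exists (d + m)^-1; split; first exact: unitR hd d0 (hF _ hd d0) hm.
by rewrite mulVf //; case: (dec_unit (hDK hd) d0 hm).
Qed.

Lemma maxM : Dfield -> maximal_ideal (sumset D M) M.
Proof.
move=> hF; apply: max_of; [exact: idealM | exact: M1 | exact: unitM].
Qed.

Lemma idpow_pow Q q r n : Q q -> sumset D M r -> idpow (sumset D M) Q n (q ^+ n * r).
Proof.
move=> hq hr; elim: n => [|n IH] /=; first by rewrite expr0 mul1r.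
have -> : q ^+ n.+1 * r = (q ^+ n * r) * q by rewrite exprS; ring.
exact: idmul_one.
Qed.

Lemma idpow_t (Q : L -> Prop) t n x : incl Q M ->
  (forall y, M y -> exists v, V v /\ y = t * v) ->
  idpow (sumset D M) Q n x -> exists v, V v /\ x = t ^+ n * v.
Proof.
move=> hQM ht; elim: n x => [|n IH] x /=.
  by move=> hx; exists x; split; [exact: (sumA_V hDK) | rewrite expr0 mul1r].
case=> s [hs ->].
apply: (@seq_sum_ind _ _ (fun y => exists v, V v /\ y = t ^+ n.+1 * v)).
- by exists 0; split; [exact: sr0 Vsr | rewrite mulr0].
- move=> _ _ [v1 [h1 ->]] [v2 [h2 ->]]; exists (v1 + v2); split; first exact: srD Vsr _ _ h1 h2.
  by rewrite mulrDr.
- move=> p /hs [h1 h2].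
  have [v1 [vv1 ->]] := IH _ h1; have [v2 [vv2 ->]] := ht _ (hQM _ h2).
  exists (v1 * v2); split; first exact (srM Vsr vv1 vv2).
  by rewrite exprS; ring.
Qed.

Lemma t_idpow t n v : M t -> V v -> idpow (sumset D M) M n.+1 (t ^+ n.+1 * v).
Proof.
move=> mt vv; elim: n => [|n IH].
  rewrite expr1 /= -[t * v]mul1r; apply: idmul_one; first exact: (A_sumA (sr1 hD)).
  by apply: MmulVr mt.
have -> : t ^+ n.+2 * v = (t ^+ n.+1 * v) * t by rewrite exprS; ring.
exact: idmul_one.
Qed.

Definition tgood t := [/\ M t, t != 0, (forall x, M x <-> exists v, V v /\ x = t * v) &
  (forall x, (forall n, exists v, V v /\ x = t ^+ n * v) -> x = 0)].

Lemma dvr_t : DVR V -> exists t, tgood t.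
Proof.
case=> _ _ [_ hP] _.
have idMV : ideal V M by case: hM.
case: (hP M idMV) => t [vt ht].
have mt : M t by apply/ht; exists 1; rewrite mulr1; split => //; exact: sr1 Vsr.
have t0 : t != 0.
  case: hM0 => m [mm m0]; case/ht: mm => r [_ e].
  by apply: contraNneq m0 => t0; rewrite e t0 mul0r.
exists t; split => //.
pose I x := forall n, exists v, V v /\ x = t ^+ n * v.
have idI : ideal V I.
  split.
  - by move=> x /(_ 0%N) [v [vv ->]]; rewrite expr0 mul1r.
  - by move=> n; exists 0; rewrite mulr0; split => //; exact: sr0 Vsr.
  - move=> x y hx hy n; have [v1 [h1 ->]] := hx n; have [v2 [h2 ->]] := hy n.
    by exists (v1 + v2); rewrite mulrDr; split => //; exact: srD Vsr _ _ h1 h2.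
  - move=> r x hr hx n; have [v1 [h1 ->]] := hx n.
    exists (r * v1); split; first exact (srM Vsr hr h1).
    by rewrite mulrCA.
case: (hP I idI) => a [va ha] x hx.
apply: NNPP => /eqP x0.
have Ia : I a by apply/ha; exists 1; rewrite mulr1; split => //; exact: sr1 Vsr.
have a0 : a != 0.
  case/ha: hx => r [_ e]; by apply: contraNneq x0 => a0; rewrite e a0 mul0r.
have [c [vc ec]] := Ia 1%N; rewrite expr1 in ec.
have Ic : I c.
  move=> n; have [w [vw ew]] := Ia n.+1; exists w; split => //.
  apply: (mulfI t0); rewrite -ec ew exprS mulrA //.
case/ha: Ic => r [vr er].
have : t * r = 1.
  by apply: (mulfI a0); rewrite mulr1 mulrCA -er -ec.
move=> e; apply: M1; rewrite -e; exact: MmulVr mt.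
Qed.

Lemma t_order t x : tgood t -> V x -> x != 0 ->
  exists k u, [/\ V u, unitV u & x = t ^+ k * u].
Proof.
case=> mt t0 htM hI vx x0.
pose P n := pb (~ exists v, V v /\ x = t ^+ n * v).
have exP : exists n, P n.
  apply: NNPP => h; apply: (negP x0); apply/eqP; apply: hI => n.
  apply: NNPP => h'; apply: h; exists n; exact/pbP.
have [n1 /pbP Pn1 min1] := ex_minnP exP.
case: n1 Pn1 min1 => [|k] Pn1 min1.
  by exfalso; apply: Pn1; exists x; rewrite expr0 mul1r.
have [u [vu eu]] : exists v, V v /\ x = t ^+ k * v.
  by apply: NNPP => h; have := min1 k (introT (pbP _) h); rewrite ltnn.
exists k, u; split => //.
apply: nonunit_M => // mu; apply: Pn1.
case/htM: mu => w [vw ew]; exists w; split => //.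
by rewrite eu ew exprS; ring.
Qed.

Lemma t_dvr t : tgood t -> DVR V.
Proof.
move=> tg; have [mt t0 htM hI] := tg.
split.
- exact: Vsr.
- exists M; split => // N [[hNV N0 ND Nm] nN1 hmax].
  have sub : incl N M.
    move=> x Nx; apply: NNPP => nx.
    have [x0 vxi] := nonunit_M (hNV _ Nx) nx.
    by apply: nN1; rewrite -(mulVf x0); apply: Nm.
  case: (hmax M (match hM with And3 a _ _ => a end) sub) => [e|h]; last by exfalso; exact: M1 h.
  by move=> x; split; [exact: sub | move/e].
- split; first exact: Vsr.
  move=> I [hIV I0 ID Im].
  case: (classic (forall x, I x -> x = 0)) => hz.
    exists 0; split; first exact: sr0 Vsr.
    move=> x; split; first by move/hz ->; exists 0; rewrite mulr0; split => //; exact: sr0 Vsr.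
    by case=> r [_ ->]; rewrite mul0r.
  have [x hx] := not_all_ex_not _ _ hz.
  have [Ix /eqP x0] := imply_to_and _ _ hx.
  have [k [u [vu [u0 vui] ex]]] := t_order tg (hIV _ Ix) x0.
  pose P n := pb (I (t ^+ n)).
  have exP : exists n, P n.
    exists k; apply/pbP.
    have -> : t ^+ k = u^-1 * x by rewrite ex mulrCA mulVf // mulr1.
    exact: Im.
  have [n0 /pbP In0 min0] := ex_minnP exP.
  exists (t ^+ n0); split; first exact (srX Vsr n0 (MV mt)).
  move=> y; split; last by case=> r [vr ->]; rewrite mulrC; apply: Im.
  move=> Iy; have [->|y0] := eqVneq y 0.
    by exists 0; rewrite mulr0; split => //; exact: sr0 Vsr.
  have [k' [u' [vu' [u0' vui'] ey]]] := t_order tg (hIV _ Iy) y0.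
  have hk : (n0 <= k')%N.
    apply: min0; apply/pbP.
    have -> : t ^+ k' = u'^-1 * y by rewrite ey mulrCA mulVf // mulr1.
    exact: Im.
  exists (t ^+ (k' - n0) * u'); split; first exact (srM Vsr (srX Vsr (k' - n0) (MV mt)) vu').
  by rewrite ey mulrA -exprD subnKC.
- case=> _ /(_ t (MV mt) t0) vti; exact: M_nonunit mt t0 vti.
Qed.

Lemma Dfield_F : Dfield <-> eqset D (fracset D).
Proof.
split.
- move=> hF x; split.
    by move=> dx; exists x, 1; split; [| exact: sr1 hD | exact: oner_neq0 | rewrite invr1 mulr1].
  by case=> a [b [da db b0 ->]]; exact (srM hD da (hF _ db b0)).
- move=> e; rewrite /Dfield => d dd d0; apply/e; exists 1, d; split; [exact: sr1 hD | done | done | by rewrite mul1r].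
Qed.

Lemma AV_field : Dfield -> AV_domain D.
Proof.
move=> hF; split => // a b da db a0 b0; exists 1%N; split => //; left.
exists (a^-1 * b); split; first exact (srM hD (hF _ da a0) db).
by rewrite !expr1 mulrA divff // mul1r.
Qed.

Lemma c4_AV : eqset D (fracset D) -> root_ext (fracset D) K -> AV_domain (sumset D M).
Proof.
move=> eF hr; apply/part8a; apply/part8b; split => //.
by apply: AV_field; apply/Dfield_F.
Qed.

Lemma Rb_eq : intclos (sumset D M) (fun _ => True) = sumset (intclos D K) M.
Proof. exact: eqset_eq (Rb_char hD hDK). Qed.

Lemma c4_Dt : eqset D (fracset D) -> root_ext (fracset D) K -> intclos D K = K.
Proof.
move=> eF hr; apply: eqset_eq => x; split; first by case.
move=> kx; split => //; have [n [n0 hn]] := hr x kx.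
by apply: isint_root hD n0 _; apply/eF.
Qed.

Lemma c4_c1 : DVR V -> eqset D (fracset D) -> root_ext (fracset D) K ->
  AV_domain (sumset D M) /\ DVR (intclos (sumset D M) (fun _ => True)).
Proof.
move=> hV' eF hr; split; first exact: c4_AV.
by rewrite Rb_eq c4_Dt // sumK.
Qed.

Lemma c1_c4 : AV_domain (sumset D M) -> DVR (intclos (sumset D M) (fun _ => True)) ->
  [/\ DVR V, eqset D (fracset D) & root_ext (fracset D) K].
Proof.
move=> hAV; rewrite Rb_eq => h.
have eK := dvr_KM Dt_sr (fun x (hx : intclos D K x) => hx.1) h.
have eK' := eqset_eq eK.
have hF : Dfield.
  rewrite /Dfield => d dd d0; have /eK [_ hi] := Kinv (hDK dd) d0.
  exact: (isint_inv hD dd d0 hi).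
have [_ hr] := proj1 part8b (proj1 part8a hAV).
split => //; last exact/Dfield_F.
by rewrite -sumK -eK'.
Qed.

Lemma idmul_in Q : ideal (sumset D M) Q -> incl (idmul (sumset D M) Q) Q.
Proof.
case=> hQR Q0 QD Qm x [s [hs ->]].
apply: seq_sum_ind => // p /hs [h1 h2]; exact: Qm.
Qed.

Lemma c4_Q : DVR V -> eqset D (fracset D) -> forall Q, maximal_ideal (sumset D M) Q -> Q = M.
Proof.
move=> _ eF Q hQ; have hF : Dfield by apply/Dfield_F.
exact: max_uniq (maxM hF) (unitM hF) hQ.
Qed.

Lemma c4_c2 : DVR V -> eqset D (fracset D) -> root_ext (fracset D) K ->
  forall Q, maximal_ideal (sumset D M) Q ->
  forall x, (forall n, (0 < n)%N -> idpow (sumset D M) Q n x) -> x = 0.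
Proof.
move=> hV' eF hr Q hQ; rewrite (c4_Q hV' eF hQ) => x hx.
have [t [mt t0 htM hI]] := dvr_t hV'.
apply: hI => n; have [v [vv ev]] := idpow_t (fun y (hy : M y) => hy) (fun y hy => proj1 (htM y) hy) (hx n.+1 (ltn0Sn n)).
by exists (t * v); split; [exact (srM Vsr (MV mt) vv) | rewrite ev exprS; ring].
Qed.

Lemma c4_c3 : DVR V -> eqset D (fracset D) -> root_ext (fracset D) K ->
  forall Q, maximal_ideal (sumset D M) Q ->
  forall A, ideal (sumset D M) A -> (exists a, A a /\ a != 0) ->
  (exists r, sumset D M r /\ ~ A r) -> exists n, incl (idpow (sumset D M) Q n) A.
Proof.
move=> hV' eF hr Q hQ; rewrite (c4_Q hV' eF hQ) => A [hAR A0 AD Am] [a [Aa a0]] _.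
have [t tg] := dvr_t hV'; have [mt t0 htM hI] := tg.
have [k [u [vu [u0 vui] ea]]] := t_order tg (sumA_V hDK (hAR _ Aa)) a0.
exists k.+1 => y hy.
have [v [vv ->]] := idpow_t (fun y (hy : M y) => hy) (fun y hy => proj1 (htM y) hy) hy.
have -> : t ^+ k.+1 * v = (u^-1 * (t * v)) * a.
  by rewrite ea exprS; field.
apply: Am => //; apply: (M_sumA hD); apply: MmulV vui _; exact: MmulVr mt.
Qed.

Lemma c3_c2 : AV_domain (sumset D M) ->
  (forall Q, maximal_ideal (sumset D M) Q ->
   forall A, ideal (sumset D M) A -> (exists a, A a /\ a != 0) ->
   (exists r, sumset D M r /\ ~ A r) -> exists n, incl (idpow (sumset D M) Q n) A) ->
  forall Q, maximal_ideal (sumset D M) Q ->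
  forall x, (forall n, (0 < n)%N -> idpow (sumset D M) Q n x) -> x = 0.
Proof.
move=> _ h3 Q hQ x hx; apply: NNPP => /eqP x0.
have [[hQR Q0 QD Qm] nQ1 _] := hQ.
have Qx : Q x by apply: (idmul_in (match hQ with And3 a _ _ => a end)); exact: (hx 1%N).
have Rx := hQR _ Qx.
have Rsr := sumA_sr hD hDK.
pose A y := exists r, sumset D M r /\ y = x ^+ 2 * r.
have hA : ideal (sumset D M) A.
  split.
  - by move=> y [r [hr ->]]; exact (srM Rsr (srX Rsr 2 Rx) hr).
  - by exists 0; rewrite mulr0; split => //; exact: sr0 Rsr.
  - move=> y z [r1 [h1 ->]] [r2 [h2 ->]]; exists (r1 + r2); rewrite mulrDr; split => //.
    exact: srD Rsr _ _ h1 h2.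
  - move=> r y hr [r1 [h1 ->]]; exists (r * r1); split; first exact (srM Rsr hr h1).
    by rewrite mulrCA.
have noA1 : forall r, sumset D M r -> x ^+ 2 * r = x -> False.
  move=> r hr e; apply: nQ1.
  have -> : 1 = (x * r) by apply: (mulfI x0); rewrite mulr1 mulrA -expr2 e.
  by rewrite mulrC; apply: Qm.
have [n hn] := h3 Q hQ A hA (ex_intro _ (x ^+ 2) (conj (ex_intro _ 1 (conj (sr1 Rsr) (esym (mulr1 _)))) (expf_neq0 2 x0))) (ex_intro _ x (conj Rx (fun '(ex_intro r (conj hr e)) => noA1 r hr (esym e)))).
case: n hn => [|n] hn.
- have [r [hr e]] := hn x Rx; exact: noA1 r hr (esym e).
- have [r [hr e]] := hn x (hx n.+1 (ltn0Sn n)); exact: noA1 r hr (esym e).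
Qed.

Lemma D_Dt x : D x -> intclos D K x.
Proof. by move=> dx; split; [exact: hDK | exact: isint_of hD dx]. Qed.

Lemma c2_c4 : AV_domain (sumset D M) ->
  (forall Q, maximal_ideal (sumset D M) Q ->
   forall x, (forall n, (0 < n)%N -> idpow (sumset D M) Q n x) -> x = 0) ->
  [/\ DVR V, eqset D (fracset D) & root_ext (fracset D) K].
Proof.
move=> hAV h2.
have [[_ hval] hfr hroot] := proj1 part8a hAV.
have [_ hr] := proj1 part8b (proj1 part8a hAV).
have Rsr := sumA_sr hD hDK.
case: hM0 => m [mm m0].
have hF : Dfield.
  rewrite /Dfield; apply: NNPP => hnf.
  have [d0 hd0] := not_all_ex_not _ _ hnf.
  have [dd0 hd0'] := imply_to_and _ _ hd0.
  have [d00 nd0] := imply_to_and _ _ hd0'.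
  pose nu d := ~ (d != 0 /\ D d^-1).
  pose Q0 y := exists d m, [/\ D d, M m, y = d + m & nu d].
  have nuD : forall a b, D a -> D b -> nu a -> nu b -> nu (a + b).
    move=> a b da db na nb [s0 ds].
    have [ea|a0] := eqVneq a 0; first by apply: nb; rewrite ea add0r in s0 ds.
    have [eb|b0] := eqVneq b 0; first by apply: na; rewrite eb addr0 in s0 ds.
    have ab0 : a / b != 0 by rewrite mulf_neq0 ?invr_eq0.
    have kab : K (a / b) by exact (srM Ksr (hDK da) (Kinv (hDK db) b0)).
    have Dts : intclos D K (a + b)^-1 := D_Dt ds.
    case: (hval _ (proj2 (hfr _) kab) ab0) => h.
    + apply: nb; split => //; apply: (isint_inv hD db b0).
      have -> : b^-1 = (1 + a / b) * (a + b)^-1 by field; rewrite s0 b0.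
      exact: (srM Dt_sr (srD Dt_sr (D_Dt (sr1 hD)) h) Dts).2.
    + apply: na; split => //; apply: (isint_inv hD da a0).
      rewrite invf_div in h.
      have -> : a^-1 = (1 + b / a) * (a + b)^-1 by field; rewrite s0 a0.
      exact: (srM Dt_sr (srD Dt_sr (D_Dt (sr1 hD)) h) Dts).2.
  have idQ0 : ideal (sumset D M) Q0.
    split.
    - by move=> y [d [m1 [hd hm1 -> _]]]; exists d, m1.
    - exists 0, 0; split; [exact: sr0 hD | exact: M0 | by rewrite addr0 | by case; rewrite eqxx].
    - move=> y z [a [m1 [ha hm1 -> na]]] [b [m2 [hb hm2 -> nb]]].
      exists (a + b), (m1 + m2); split; [exact: srD hD _ _ ha hb | exact: MD | ring | exact: nuD].
    - move=> r y [a [m1 [ha hm1 ->]]] [b [m2 [hb hm2 -> nb]]].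
      exists (a * b), (a * m2 + m1 * (b + m2)); split.
      + exact (srM hD ha hb).
      + apply: MD; first by apply: MmulV hm2; exact: hKV (hDK ha).
        by apply: MmulVr hm1; apply: srD Vsr _ _ (hKV (hDK hb)) (MV hm2).
      + ring.
      + move=> [ab0 dab]; apply: nb; split; first by move: ab0; rewrite mulf_eq0 negb_or => /andP[].
        have a0 : a != 0 by move: ab0; rewrite mulf_eq0 negb_or => /andP[].
        have -> : b^-1 = a * (a * b)^-1 by rewrite invfM mulrA divff // mul1r.
        exact (srM hD ha dab).
  have uQ0 : unitprop Q0.
    move=> x [d [m1 [hd hm1 ->]]] nx.
    have [d0' dinv] : d != 0 /\ D d^-1 by apply: NNPP => h; apply: nx; exists d, m1.
    exists (d + m1)^-1; split; first exact: unitR hd d0' dinv hm1.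
    by rewrite mulVf //; case: (dec_unit (hDK hd) d0' hm1).
  have nQ01 : ~ Q0 1.
    case=> d [m1 [hd hm1 e nd]]; apply: nd.
    have d1 : d = 1.
      apply: esym; apply: (KMuniq (sr1 Ksr) (hDK hd) M0 hm1).
      by rewrite addr0.
    by rewrite d1 invr1; split; [exact: oner_neq0 | exact: sr1 hD].
  have mQ0 := max_of idQ0 nQ01 uQ0.
  apply: (negP m0); apply/eqP; apply: (h2 _ mQ0) => n _.
  have Qd : Q0 d0 by exists d0, 0; split; [done | exact: M0 | by rewrite addr0 | by case].
  have -> : m = d0 ^+ n * (d0^-1 ^+ n * m).
    by rewrite mulrA pow_cancel // subnn expr0 mul1r.
  apply: idpow_pow => //; apply: (M_sumA hD); apply: MmulV mm.
  exact (srX Vsr n (hKV (Kinv (hDK dd0) d00))).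
split; last by [].
2: exact/Dfield_F.
have mx := maxM hF.
have hI0 := h2 M mx.
have idp1 : forall x, M x -> idpow (sumset D M) M 1 x.
  by move=> x mx'; rewrite /= -[x]mul1r; apply: idmul_one => //; exact: sr1 Rsr.
have [t [mt nt]] : exists t, M t /\ ~ idpow (sumset D M) M 2 t.
  apply: NNPP => hn.
  have all2 : forall t, M t -> idpow (sumset D M) M 2 t.
    by move=> t mt; apply: NNPP => nt; apply: hn; exists t.
  have allM : forall n x, M x -> idpow (sumset D M) M n.+1 x.
    elim=> [|n IH] x mx'; first exact: idp1.
    have := all2 x mx'; rewrite [idpow _ _ 2]/=.
    apply: idmul_mono => y /= hy; apply: IH.
    exact: (idmul_in idealM).
  by apply: (negP m0); apply/eqP; apply: hI0 => n n0; rewrite -(prednK n0); apply: allM.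
have t0 : t != 0.
  apply/eqP => t0; apply: nt; rewrite t0; exists [::]; split => //; by rewrite big_nil.
have htM : forall x, M x <-> exists v, V v /\ x = t * v.
  move=> x; split; last by case=> v [vv ->]; apply: MmulVr mt.
  move=> mx'; have [->|x0] := eqVneq x 0.
    by exists 0; rewrite mulr0; split => //; exact: sr0 Vsr.
  have xt0 : x / t != 0 by rewrite mulf_neq0 ?invr_eq0.
  have ok : V (x / t) -> exists v, V v /\ x = t * v.
    by move=> h; exists (x / t); split => //; apply: mul_div.
  case: (proj2 hV _ (hVL (x / t)) xt0) => h; first exact: ok.
  rewrite invf_div in h.
  case: (classic (M (t / x))) => htx.
    exfalso; apply: nt; rewrite (mul_div t x0) /=; apply: idmul_one => //; exact: idp1.
  have [_ hh] := nonunit_M h htx; rewrite invf_div in hh; exact: ok.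
apply: (t_dvr (t := t)); split => // x hx.
apply: hI0 => n n0; rewrite -(prednK n0).
have [v [vv ->]] := hx n.-1.+1; exact: t_idpow.
Qed.

Lemma main_thm :
  let F := fracset D in
  let Dt := intclos D K in
  let R := sumset D M in
  let Rb := intclos R (fun _ => True) in
  ((DVR R <-> eqset D K /\ DVR V) /\
   (eqset D K /\ DVR V <-> eqset R V /\ DVR R)) /\
  ((rational_valuation_domain R <-> eqset D K /\ rational_valuation_domain V) /\
   (eqset D K /\ rational_valuation_domain V <->
      eqset R V /\ rational_valuation_domain R)) /\
  (root_ext R Rb <-> root_ext D Dt) /\
  (bounded_root_ext R Rb <-> bounded_root_ext D Dt) /\
  ((AV_domain R <-> [/\ valuation_domain Dt, eqset (fracset Dt) K & root_ext D Dt]) /\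
   ([/\ valuation_domain Dt, eqset (fracset Dt) K & root_ext D Dt] <->
      AV_domain D /\ root_ext F K)) /\
  (let c1 := AV_domain R /\ DVR Rb in
   let c2 := AV_domain R /\ forall Q, maximal_ideal R Q ->
               forall x, (forall n, (0 < n)%N -> idpow R Q n x) -> x = 0 in
   let c3 := AV_domain R /\ forall Q, maximal_ideal R Q ->
               forall A, ideal R A -> (exists a, A a /\ a != 0) ->
               (exists r, R r /\ ~ A r) ->
               exists n, incl (idpow R Q n) A in
   let c4 := [/\ DVR V, eqset D F & root_ext F K] in
   (c1 <-> c2) /\ (c2 <-> c3) /\ (c3 <-> c4)).
Proof.
move=> F Dt R Rb.
have RV : forall P : (L -> Prop) -> Prop, eqset D K -> P V -> P R.
  by move=> P e h; rewrite /R (eqset_eq e) sumK.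
have eRV : eqset D K -> eqset R V by move=> e; rewrite /R (eqset_eq e) sumK.
have c4c2 : [/\ DVR V, eqset D F & root_ext F K] ->
    AV_domain R /\ forall Q, maximal_ideal R Q ->
      forall x, (forall n, (0 < n)%N -> idpow R Q n x) -> x = 0.
  case=> h1 h2 h3; split; [exact: c4_AV | exact: c4_c2].
have c4c3 : [/\ DVR V, eqset D F & root_ext F K] ->
    AV_domain R /\ forall Q, maximal_ideal R Q ->
               forall A, ideal R A -> (exists a, A a /\ a != 0) ->
               (exists r, R r /\ ~ A r) ->
               exists n, incl (idpow R Q n) A.
  case=> h1 h2 h3; split; [exact: c4_AV | exact: c4_c3].
have c4c1 : [/\ DVR V, eqset D F & root_ext F K] -> AV_domain R /\ DVR Rb.
  by case=> h1 h2 h3; apply: c4_c1.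
have c1c4 : AV_domain R /\ DVR Rb -> [/\ DVR V, eqset D F & root_ext F K].
  by case=> h1 h2; apply: c1_c4.
have c2c4 : (AV_domain R /\ forall Q, maximal_ideal R Q ->
      forall x, (forall n, (0 < n)%N -> idpow R Q n x) -> x = 0) ->
      [/\ DVR V, eqset D F & root_ext F K].
  by case=> h1 h2; apply: c2_c4.
have c3c2 : (AV_domain R /\ forall Q, maximal_ideal R Q ->
               forall A, ideal R A -> (exists a, A a /\ a != 0) ->
               (exists r, R r /\ ~ A r) ->
               exists n, incl (idpow R Q n) A) ->
    (AV_domain R /\ forall Q, maximal_ideal R Q ->
      forall x, (forall n, (0 < n)%N -> idpow R Q n x) -> x = 0).
  by case=> h1 h3; split => //; apply: c3_c2.
split.
  split; split.
  - by move=> h; have e := dvr_KM hD hDK h; split => //; rewrite -sumK -(eqset_eq e).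
  - by case=> e h; rewrite /R (eqset_eq e) sumK.
  - by case=> e h; split; [exact: eRV | rewrite /R (eqset_eq e) sumK].
  - by case=> _ h; have e := dvr_KM hD hDK h; split => //; rewrite -sumK -(eqset_eq e).
split.
  split; split.
  - by move=> h; have e := rvd_KM hD hDK h; split => //; rewrite -sumK -(eqset_eq e).
  - by case=> e h; rewrite /R (eqset_eq e) sumK.
  - by case=> e h; split; [exact: eRV | rewrite /R (eqset_eq e) sumK].
  - by case=> _ h; have e := rvd_KM hD hDK h; split => //; rewrite -sumK -(eqset_eq e).
split; first exact: part7a.
split; first exact: part7b.
split; first by split; [exact: part8a | exact: part8b].
move=> c1 c2 c3 c4.
split; first by split => h; [exact: c4c2 (c1c4 h) | exact: c4c1 (c2c4 h)].
split; first by split => h; [exact: c4c3 (c2c4 h) | exact: c3c2 h].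
by split => h; [exact: c2c4 (c3c2 h) | exact: c4c3 h].
Qed.

End Main.

Unset Implicit Arguments.

Theorem theorem13 (L : fieldType) (V M K D : L -> Prop)
  (* (V, M) valuation domain with quotient field L *)
  (hV : valuation_domain V) (hVL : forall x, fracset V x)
  (hM : maximal_ideal V M) (hM0 : exists m, M m /\ m != 0)
  (* K subfield of V with V = K + M *)
  (hK : is_field K) (hKV : incl K V) (hVKM : eqset V (sumset K M))
  (* D subring of K *)
  (hD : subring D) (hDK : incl D K) :
  let F := fracset D in
  let Dt := intclos D K in
  let R := sumset D M in
  let Rb := intclos R (fun _ => True) in
  (* (6) *)
  ((DVR R <-> eqset D K /\ DVR V) /\
   (eqset D K /\ DVR V <-> eqset R V /\ DVR R)) /\
  ((rational_valuation_domain R <-> eqset D K /\ rational_valuation_domain V) /\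
   (eqset D K /\ rational_valuation_domain V <->
      eqset R V /\ rational_valuation_domain R)) /\
  (* (7) *)
  (root_ext R Rb <-> root_ext D Dt) /\
  (bounded_root_ext R Rb <-> bounded_root_ext D Dt) /\
  (* (8) *)
  ((AV_domain R <-> [/\ valuation_domain Dt, eqset (fracset Dt) K & root_ext D Dt]) /\
   ([/\ valuation_domain Dt, eqset (fracset Dt) K & root_ext D Dt] <->
      AV_domain D /\ root_ext F K)) /\
  (* (9) *)
  (let c1 := AV_domain R /\ DVR Rb in
   let c2 := AV_domain R /\ forall Q, maximal_ideal R Q ->
               forall x, (forall n, (0 < n)%N -> idpow R Q n x) -> x = 0 in
   let c3 := AV_domain R /\ forall Q, maximal_ideal R Q ->
               forall A, ideal R A -> (exists a, A a /\ a != 0) ->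
               (exists r, R r /\ ~ A r) ->
               exists n, incl (idpow R Q n) A in
   let c4 := [/\ DVR V, eqset D F & root_ext F K] in
   (c1 <-> c2) /\ (c2 <-> c3) /\ (c3 <-> c4)).
Proof.
move=> F Dt R Rb.
exact: (main_thm hV hVL hM hM0 hK hKV hVKM hD hDK).
Qed.
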